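(* For $q>-1$ and $x,y>0$ let $H(q,x,y)=\frac{1}{1+q}\int_{-1}^q\frac{(1+s)^2}{s^2}(1-e^{-sx})(1-e^{-sy})\,ds$, and for $X,Y>0$ let $$\tilde H(q,X,Y)=\frac{e^{-(X+Y)/(1+q)}}{(1+q)^2}\,H\Big(q,\frac{X}{1+q},\frac{Y}{1+q}\Big).$$ Then, for every sequence $q_n\to-1$ (with $q_n>-1$), $$\tilde H(q_n,X,Y)\to\frac{1}{(X+Y)^3}\int_0^{X+Y}\xi^2e^{-\xi}\,d\xi$$ locally uniformly in $(X,Y)\in(0,\infty)^2$. *)

(* Defs.v *)
From Stdlib Require Import Reals.
From Coquelicot Require Import Coquelicot.
Open Scope R_scope.

(* Integrand of H; at s = 0 the formula is 0/0 (removable singularity);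
   the value at a single point does not affect the Riemann integral. *)
Definition H_integrand (x y s : R) : R :=
  (1 + s) ^ 2 / s ^ 2 * (1 - exp (- (s * x))) * (1 - exp (- (s * y))).

Definition H (q x y : R) : R :=
  / (1 + q) * RInt (H_integrand x y) (-1) q.

Definition Htilde (q X Y : R) : R :=
  exp (- ((X + Y) / (1 + q))) / (1 + q) ^ 2 * H q (X / (1 + q)) (Y / (1 + q)).

Definition Hlim (X Y : R) : R :=
  / (X + Y) ^ 3 * RInt (fun xi => xi ^ 2 * exp (- xi)) 0 (X + Y).

(* Main.v *)
Require Import Defs.
From Stdlib Require Import Reals Lra.
From Coquelicot Require Import Coquelicot.
Open Scope R_scope.

Definition f0 (X Y t : R) := t ^ 2 * exp (- (t * (X + Y))).
Definition g (e X Y t : R) :=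
  t ^ 2 / (1 - e * t) ^ 2 * (exp (- (t * X)) - exp (- (X / e)))
    * (exp (- (t * Y)) - exp (- (Y / e))).

Lemma ex_f0 X Y : ex_RInt (f0 X Y) 0 1.
Proof.
  apply (ex_RInt_continuous (V:=R_CompleteNormedModule)); intros z _. apply (ex_derive_continuous (K:=R_AbsRing) (V:=R_NormedModule)).
  unfold f0. auto_derive. auto.
Qed.

Lemma ex_g e X Y : 0 < e < 1/2 -> ex_RInt (g e X Y) 0 1.
Proof.
  intros He. apply (ex_RInt_continuous (V:=R_CompleteNormedModule)); intros z Hz. apply (ex_derive_continuous (K:=R_AbsRing) (V:=R_NormedModule)).
  rewrite Rmin_left in Hz by lra. rewrite Rmax_right in Hz by lra.
  unfold g. auto_derive. repeat split; try auto.
  all: try (apply pow_nonzero; nra).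
  all: nra.
Qed.

Lemma Hlim_eq X Y : 0 < X + Y -> Hlim X Y = RInt (f0 X Y) 0 1.
Proof.
  intros HS. set (S := X + Y).
  set (F := fun xi => xi ^ 2 * exp (- xi)).
  assert (HF : ex_RInt F (S * 0 + 0) (S * 1 + 0)).
  { apply (ex_RInt_continuous (V:=R_CompleteNormedModule)); intros z _. apply (ex_derive_continuous (K:=R_AbsRing) (V:=R_NormedModule)).
    unfold F. auto_derive. auto. }
  pose proof (RInt_comp_lin F S 0 0 1 HF) as E.
  replace (S * 0 + 0) with 0 in E by ring.
  replace (S * 1 + 0) with S in E by ring.
  unfold Hlim. fold S. fold F. rewrite <- E.
  rewrite (RInt_ext _ (fun y => scal (S ^ 3) (f0 X Y y))).
  - rewrite (RInt_scal (V:=R_CompleteNormedModule)) by apply ex_f0. unfold scal; simpl; unfold mult; simpl.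
    field. unfold S; lra.
  - intros y _. unfold scal; simpl; unfold mult; simpl. unfold F, f0. fold S.
    replace (S * y + 0) with (y * S) by ring. ring.
Qed.
Lemma Htilde_eq q X Y : 0 < 1 + q < 1/2 ->
  Htilde q X Y = RInt (g (1 + q) X Y) 0 1.
Proof.
  intros He. set (e := 1 + q) in *.
  set (F := H_integrand (X / e) (Y / e)).
  assert (HF : ex_RInt F (e * 0 + -1) (e * 1 + -1)).
  { apply (ex_RInt_continuous (V:=R_CompleteNormedModule)); intros z Hz.
    rewrite Rmin_left in Hz by lra. rewrite Rmax_right in Hz by lra.
    apply (ex_derive_continuous (K:=R_AbsRing) (V:=R_NormedModule)).
    unfold F, H_integrand. auto_derive. repeat split; auto.
    all: try (apply pow_nonzero; nra). all: nra. }
  pose proof (RInt_comp_lin F e (-1) 0 1 HF) as E.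
  replace (e * 0 + -1) with (-1) in E by ring.
  replace (e * 1 + -1) with q in E by (unfold e; ring).
  unfold Htilde, H. fold e. fold F. rewrite <- E.
  set (K := exp (- ((X + Y) / e)) / e ^ 2 * / e).
  transitivity (K * RInt (fun y : R => scal e (F (e * y + -1))) 0 1).
  { unfold K. rewrite Rmult_assoc. reflexivity. }
  rewrite <- (RInt_scal (V:=R_CompleteNormedModule) _ 0 1 K)
    by (apply (ex_RInt_comp_lin (V:=R_CompleteNormedModule)); exact HF).
  apply RInt_ext. intros y Hy.
  rewrite Rmin_left in Hy by lra. rewrite Rmax_right in Hy by lra.
  unfold scal; simpl; unfold mult; simpl.
  unfold K, F, H_integrand, g.
  set (EX := exp (X / e)). set (EY := exp (Y / e)).
  assert (PX : 0 < EX) by apply exp_pos. assert (PY : 0 < EY) by apply exp_pos.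
  assert (E1 : exp (- ((e * y + -1) * (X / e))) = EX * exp (- (y * X))).
  { unfold EX. rewrite <- exp_plus. f_equal. field. lra. }
  assert (E2 : exp (- ((e * y + -1) * (Y / e))) = EY * exp (- (y * Y))).
  { unfold EY. rewrite <- exp_plus. f_equal. field. lra. }
  assert (E3 : exp (- ((X + Y) / e)) = / EX * / EY).
  { unfold EX, EY. rewrite <- !exp_Ropp, <- exp_plus. f_equal. field. lra. }
  assert (E4 : exp (- (X / e)) = / EX) by (unfold EX; apply exp_Ropp).
  assert (E5 : exp (- (Y / e)) = / EY) by (unfold EY; apply exp_Ropp).
  rewrite E1, E2, E3, E4, E5.
  assert (e * y + -1 <> 0) by nra. assert (1 - e * y <> 0) by nra.
  field. repeat split; lra.
Qed.
Lemma exp_small e a X : 0 < e -> 0 < a -> a <= X -> 0 < exp (- (X / e)) <= e / a.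
Proof.
  intros He Ha HX. split. apply exp_pos.
  rewrite exp_Ropp.
  assert (H1 : 1 + X / e <= exp (X / e)) by apply exp_ineq1_le.
  assert (H2 : a / e <= X / e) by (apply Rmult_le_compat_r; [apply Rlt_le, Rinv_0_lt_compat|]; lra).
  assert (H3 : 0 < a / e) by (apply Rdiv_lt_0_compat; lra).
  replace (e / a) with (/ (a / e)) by (field; lra).
  apply Rinv_le_contravar; lra.
Qed.

Lemma exp_neg_le1 z : 0 <= z -> 0 < exp (- z) <= 1.
Proof.
  intros Hz. split. apply exp_pos. rewrite exp_Ropp.
  pose proof (exp_ineq1_le z). rewrite <- Rinv_1. apply Rinv_le_contravar; lra.
Qed.

Lemma pt_bound e a X Y t : 0 < e <= 1/2 -> 0 < a -> a <= X -> a <= Y -> 0 <= t <= 1 ->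
  Rabs (g e X Y t - f0 X Y t) <= 8 * e + 2 * (e / a).
Proof.
  intros He Ha HX HY Ht. unfold g, f0.
  set (u := exp (- (t * X))). set (v := exp (- (t * Y))).
  assert (Euv : exp (- (t * (X + Y))) = u * v).
  { unfold u, v. rewrite <- exp_plus. f_equal. ring. }
  rewrite Euv.
  destruct (exp_small e a X) as [A1 A2]; try lra.
  destruct (exp_small e a Y) as [B1 B2]; try lra.
  destruct (exp_neg_le1 (X / e)) as [_ A3].
  { apply Rlt_le, Rdiv_lt_0_compat; lra. }
  destruct (exp_neg_le1 (Y / e)) as [_ B3].
  { apply Rlt_le, Rdiv_lt_0_compat; lra. }
  destruct (exp_neg_le1 (t * X)) as [U1 U2]. { nra. }
  destruct (exp_neg_le1 (t * Y)) as [V1 V2]. { nra. }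
  fold u v in U1, U2, V1, V2.
  set (al := exp (- (X / e))) in *. set (be := exp (- (Y / e))) in *.
  set (w := 1 - e * t).
  assert (Hw : 1/2 <= w <= 1) by (unfold w; nra).
  set (c := / w ^ 2).
  assert (Hc1 : c * w ^ 2 = 1) by (unfold c; field; lra).
  assert (Hc4 : c <= 4).
  { unfold c. replace 4 with (/ ((1/2) ^ 2)) by field.
    apply Rinv_le_contravar; nra. }
  assert (Hc : 0 <= c - 1 <= 8 * e).
  { assert (c - 1 = (1 - w ^ 2) * c) by nra.
    assert (0 <= 1 - w ^ 2 <= 2 * e) by (unfold w in *; nra).
    assert (0 < c) by (unfold c; apply Rinv_0_lt_compat; nra).
    nra. }
  set (P := (u - al) * (v - be)).
  assert (HP : Rabs P <= 1).
  { unfold P. rewrite Rabs_mult.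
    replace 1 with (1 * 1) by ring.
    apply Rmult_le_compat; try apply Rabs_pos; apply Rabs_le; lra. }
  assert (HD : Rabs (P - u * v) <= al + be).
  { unfold P. apply Rabs_le. split; nra. }
  replace (t ^ 2 / w ^ 2 * (u - al) * (v - be) - t ^ 2 * (u * v))
    with (t ^ 2 * ((c - 1) * P + (P - u * v)))
    by (unfold c, P; field; lra).
  rewrite Rabs_mult.
  assert (Ht2 : Rabs (t ^ 2) <= 1).
  { rewrite Rabs_right by nra. nra. }
  assert (HS : Rabs ((c - 1) * P + (P - u * v)) <= 8 * e + 2 * (e / a)).
  { eapply Rle_trans. apply Rabs_triang.
    rewrite Rabs_mult. rewrite (Rabs_right (c - 1)) by lra.
    assert ((c - 1) * Rabs P <= 8 * e) by nra. lra. }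
  assert (0 <= Rabs ((c - 1) * P + (P - u * v))) by apply Rabs_pos.
  assert (0 <= Rabs (t ^ 2)) by apply Rabs_pos.
  nra.
Qed.
Theorem lemma3p10 (q : nat -> R) :
  (forall n, -1 < q n) ->
  is_lim_seq q (-1) ->
  forall a b : R, 0 < a -> a <= b ->
  forall eps : R, 0 < eps ->
  exists N : nat, forall n : nat, (N <= n)%nat ->
    forall X Y : R, a <= X <= b -> a <= Y <= b ->
      Rabs (Htilde (q n) X Y - Hlim X Y) < eps.
Proof.
  intros Hq Hlim a b Ha Hab eps Heps.
  set (K := 8 + 2 / a).
  assert (HK : 0 < K) by (unfold K; assert (0 < 2 / a) by (apply Rdiv_lt_0_compat; lra); lra).
  set (d := Rmin (1/2) (eps / (2 * K))).
  assert (Hd : 0 < d).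
  { unfold d. apply Rmin_glb_lt. lra. apply Rdiv_lt_0_compat; lra. }
  apply is_lim_seq_spec in Hlim. destruct (Hlim (mkposreal d Hd)) as [N HN].
  exists N. intros n Hn X Y HX HY.
  specialize (HN n Hn). simpl in HN.
  pose proof (Hq n) as Hqn.
  set (e := 1 + q n).
  assert (Hd1 : d <= 1/2) by apply Rmin_l.
  assert (Hd2 : d <= eps / (2 * K)) by apply Rmin_r.
  assert (He : 0 < e < d) by (unfold e; apply Rabs_def2 in HN; lra).
  rewrite Htilde_eq by (fold e; lra).
  rewrite Hlim_eq by lra. fold e.
  assert (Ei : RInt (g e X Y) 0 1 - RInt (f0 X Y) 0 1 =
               RInt (fun t => g e X Y t - f0 X Y t) 0 1).
  { symmetry. apply (RInt_minus (V:=R_CompleteNormedModule)).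
    apply ex_g; lra. apply ex_f0. }
  rewrite Ei.
  eapply Rle_lt_trans.
  apply (abs_RInt_le_const _ 0 1 (8 * e + 2 * (e / a))).
  - lra.
  - apply (ex_RInt_minus (V:=R_NormedModule)). apply ex_g; lra. apply ex_f0.
  - intros t Ht. apply pt_bound; lra.
  - replace ((1 - 0) * (8 * e + 2 * (e / a))) with (e * K) by (unfold K; field; lra).
    assert (e * K < d * K) by nra.
    assert (d * K <= eps / 2).
    { replace (eps / 2) with (eps / (2 * K) * K) by (field; lra). nra. }
    lra.
Qed.
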